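(* Let $n\in\mathbb N$ and $F\colon\mathbb R_+^n\to\mathbb R_+$. If $F\in P^n_B$, then for all $K_1,\dots,K_n\geqslant1$ there exists $K\geqslant1$ such that $F\in P_{(B_{K_1},\dots,B_{K_n})-B_K}$.
   Context: $\mathbb R_+=[0,\infty)$. A semimetric on $X$ is $d\colon X^2\to\mathbb R_+$ with $d(x,y)=0\iff x=y$ and $d(x,y)=d(y,x)$. For $K\geqslant1$, a b-metric with relaxation constant $K$ (condition $B_K$) is a semimetric with $d(x,z)\leqslant K(d(x,y)+d(y,z))$ for all $x,y,z$; a b-metric is a semimetric satisfying $B_K$ for some $K\geqslant1$. For spaces $(X_i,d_i)$ and $F\colon\mathbb R_+^n\to\mathbb R_+$, define $D$ on $\mathbf X=\prod_{i=1}^nX_i$ by $D(\mathbf x,\mathbf y)=F(d_1(x_1,y_1),\dots,d_n(x_n,y_n))$. $P_{(B_{K_1},\dots,B_{K_n})-B_K}$ is the set of $F$ such that for every collection of semimetric spaces $(X_i,d_i)$ with $d_i$ satisfying $B_{K_i}$, $D$ satisfies $B_K$. $P^n_B$ is the set of $F$ such that for every collection of b-metric spaces $(X_i,d_i)$, $i=1,\dots,n$ (with arbitrary relaxation constants), $D$ is a b-metric on $\mathbf X$. *)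

(* Defs.v *)
From mathcomp Require Import ssreflect ssrbool eqtype ssrnat fintype.
From Stdlib Require Import Reals.
Open Scope R_scope.

Definition semimetric (X : Type) (d : X -> X -> R) : Prop :=
  (forall x y, 0 <= d x y) /\
  (forall x y, d x y = 0 <-> x = y) /\
  (forall x y, d x y = d y x).

Definition relaxed_tri (K : R) (X : Type) (d : X -> X -> R) : Prop :=
  forall x y z, d x z <= K * (d x y + d y z).

Definition condB (K : R) (X : Type) (d : X -> X -> R) : Prop :=
  semimetric X d /\ relaxed_tri K X d.

Definition bmetric (X : Type) (d : X -> X -> R) : Prop :=
  semimetric X d /\ exists K, 1 <= K /\ relaxed_tri K X d.

Definition prodD (n : nat) (F : ('I_n -> R) -> R) (X : 'I_n -> Type)
  (d : forall i, X i -> X i -> R) : (forall i, X i) -> (forall i, X i) -> R :=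
  fun x y => F (fun i => d i (x i) (y i)).

Definition P_BKs_BK (n : nat) (F : ('I_n -> R) -> R) (Ks : 'I_n -> R) (K : R) : Prop :=
  forall (X : 'I_n -> Type) (d : forall i, X i -> X i -> R),
    (forall i, condB (Ks i) (X i) (d i)) ->
    condB K (forall i, X i) (prodD n F X d).

Definition P_B (n : nat) (F : ('I_n -> R) -> R) : Prop :=
  forall (X : 'I_n -> Type) (d : forall i, X i -> X i -> R),
    (forall i, bmetric (X i) (d i)) ->
    bmetric (forall i, X i) (prodD n F X d).

(* Main.v *)
Require Import Defs.
From mathcomp Require Import ssreflect ssrbool eqtype ssrnat fintype.
From Stdlib Require Import Reals.
From Stdlib Require Import Lra Lia Psatz FunctionalExtensionality ClassicalDescription.
Open Scope R_scope.
Set Implicit Arguments.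

Definition T3 := (R*R*R)%type.
Definition ta (t:T3) := fst (fst t).
Definition tb (t:T3) := snd (fst t).
Definition tc (t:T3) := snd t.

Definition valid (K:R) (t:T3) : Prop :=
  0 <= ta t /\ 0 <= tb t /\ 0 <= tc t /\
  ta t <= K*(tb t + tc t) /\ tb t <= K*(ta t + tc t) /\ tc t <= K*(ta t + tb t) /\
  (ta t = 0 -> tb t = tc t) /\ (tb t = 0 -> ta t = tc t) /\ (tc t = 0 -> ta t = tb t).

Definition laby (t:T3) : nat := if Req_dec_T (ta t) 0 then 0%nat else 1%nat.
Definition labz (t:T3) : nat :=
  if Req_dec_T (tc t) 0 then 0%nat else if Req_dec_T (tb t) 0 then 1%nat else 2%nat.
Definition used K t (j:nat) : Prop := valid K t /\ (j = 0%nat \/ j = laby t \/ j = labz t).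
Definition tri (t:T3) (j k : nat) : R :=
  if Nat.eqb j k then 0 else if Nat.eqb (j+k) 1 then ta t
  else if Nat.eqb (j+k) 3 then tb t else tc t.
Definition MM (t:T3) := Rabs (ta t) + Rabs (tb t) + Rabs (tc t) + 1.
Definition spec K (p q : T3*nat) : Prop :=
  fst p = fst q /\ used K (fst p) (snd p) /\ used K (fst q) (snd q).
Definition dU K (p q : T3*nat) : R :=
  if excluded_middle_informative (p = q) then 0
  else if excluded_middle_informative (spec K p q) then tri (fst p) (snd p) (snd q)
  else Rmax (MM (fst p)) (MM (fst q)).

Lemma used_lab K t j : used K t j -> (j = 0 \/ j = 1 \/ j = 2)%nat.
Proof.
  move=> [_ H]; unfold laby, labz in H.
  destruct (Req_dec_T (ta t) 0); destruct (Req_dec_T (tc t) 0);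
  destruct (Req_dec_T (tb t) 0); simpl in H; lia.
Qed.

Lemma used1 K t : used K t 1 -> ta t <> 0.
Proof.
  move=> [[Ha [Hb [Hc [_ [_ [_ [Ia [Ib Ic]]]]]]]] H]; unfold laby, labz in H.
  destruct (Req_dec_T (ta t) 0); destruct (Req_dec_T (tc t) 0);
  destruct (Req_dec_T (tb t) 0) as [eb|nb]; simpl in H; try lia; try lra.
Qed.

Lemma used2 K t : used K t 2 -> tc t <> 0 /\ tb t <> 0.
Proof.
  move=> [_ H]; unfold laby, labz in H.
  destruct (Req_dec_T (ta t) 0); destruct (Req_dec_T (tc t) 0);
  destruct (Req_dec_T (tb t) 0); simpl in H; try lia; auto.
Qed.

Lemma tri_sym t j k : tri t j k = tri t k j.
Proof. unfold tri. rewrite Nat.eqb_sym (addnC j k). reflexivity. Qed.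

Lemma tri_nonneg K t j k : valid K t -> 0 <= tri t j k.
Proof.
  move=> [Ha [Hb [Hc _]]]; unfold tri.
  destruct (Nat.eqb j k); [lra|]; destruct (Nat.eqb (j+k) 1); [lra|];
  destruct (Nat.eqb (j+k) 3); lra.
Qed.

Lemma tri_lt K t j k : valid K t -> tri t j k < MM t.
Proof.
  move=> [Ha [Hb [Hc _]]]; unfold MM, tri.
  rewrite (Rabs_pos_eq _ Ha) (Rabs_pos_eq _ Hb) (Rabs_pos_eq _ Hc).
  destruct (Nat.eqb j k); [lra|]; destruct (Nat.eqb (j+k) 1); [lra|];
  destruct (Nat.eqb (j+k) 3); lra.
Qed.

Lemma MM_ge1 t : 1 <= MM t.
Proof. unfold MM; pose proof (Rabs_pos (ta t)); pose proof (Rabs_pos (tb t));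
  pose proof (Rabs_pos (tc t)); lra. Qed.

Lemma tri_pos K t j k : used K t j -> used K t k -> j <> k -> tri t j k <> 0.
Proof.
  move=> Uj Uk ne.
  have [Ha [Hb [Hc _]]] := proj1 Uj.
  have := used_lab Uj; have := used_lab Uk.
  move=> [e|[e|e]] [e'|[e'|e']]; subst; try lia; unfold tri; simpl.
  all: first [exact: (used1 Uk) | exact: (used1 Uj) | exact: (proj1 (used2 Uk))
    | exact: (proj2 (used2 Uk)) | exact: (proj1 (used2 Uj)) | exact: (proj2 (used2 Uj))].
Qed.

Lemma tri_B K t j k l : 1 <= K -> valid K t -> used K t j -> used K t k -> used K t l ->
  tri t j l <= K * (tri t j k + tri t k l).
Proof.
  move=> HK V Uj Uk Ul.
  have [Ha [Hb [Hc [H1 [H2 [H3 _]]]]]] := V.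
  have := used_lab Uj; have := used_lab Uk; have := used_lab Ul.
  move=> [e|[e|e]] [e'|[e'|e']] [e''|[e''|e'']]; subst; unfold tri; simpl; nra.
Qed.

Lemma dU_cases K p q :
  (p = q /\ dU K p q = 0) \/
  (p <> q /\ spec K p q /\ dU K p q = tri (fst p) (snd p) (snd q)) \/
  (p <> q /\ ~ spec K p q /\ dU K p q = Rmax (MM (fst p)) (MM (fst q))).
Proof.
  unfold dU; destruct (excluded_middle_informative (p = q)); auto.
  destruct (excluded_middle_informative (spec K p q)); auto.
Qed.

Lemma dU_spec K p q : spec K p q -> dU K p q = tri (fst p) (snd p) (snd q).
Proof.
  move=> S; have [[e H]|[[_ [_ H]]|[_ [ns _]]]] := dU_cases K p q.
  - subst; rewrite H; unfold tri; rewrite Nat.eqb_refl; reflexivity.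
  - exact H.
  - contradiction.
Qed.

Lemma dU_nonneg K p q : 0 <= dU K p q.
Proof.
  have [[e H]|[[_ [S H]]|[_ [ns H]]]] := dU_cases K p q; rewrite H.
  - lra.
  - exact: (tri_nonneg _ _ (proj1 (proj1 (proj2 S)))).
  - pose proof (MM_ge1 (fst p)); pose proof (Rmax_l (MM (fst p)) (MM (fst q))); lra.
Qed.

Lemma Rmax_tri a b c : 0 <= b -> Rmax a c <= Rmax a b + Rmax b c.
Proof. move=> Hb; unfold Rmax;
  destruct (Rle_dec a c); destruct (Rle_dec a b); destruct (Rle_dec b c); lra. Qed.

Lemma dU_bmetric K : 1 <= K -> condB K (T3*nat) (dU K).
Proof.
  move=> HK; split; [split; [|split]|].
  - exact: dU_nonneg.
  - move=> p q; split.
    + have [[e H]|[[ne [S H]]|[ne [ns H]]]] := dU_cases K p q; [done| |].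
      * rewrite H => E; exfalso; move: E; apply: tri_pos.
        -- exact: (proj1 (proj2 S)).
        -- rewrite (proj1 S); exact: (proj2 (proj2 S)).
        -- move=> es; apply: ne; destruct p as [t j], q as [t' k]; simpl in *;
           have et := proj1 S; simpl in et; rewrite es et; reflexivity.
      * rewrite H => E; pose proof (MM_ge1 (fst p));
        pose proof (Rmax_l (MM (fst p)) (MM (fst q))); lra.
    + move=> ->; have [[e H]|[[ne _]|[ne _]]] := dU_cases K q q; [done|done|done].
  - move=> p q.
    have [[e H]|[[ne [S H]]|[ne [ns H]]]] := dU_cases K p q.
    + subst; reflexivity.
    + have S' : spec K q p by move: S => [e [u v]]; split; [rewrite e|split].
      rewrite H (dU_spec S') tri_sym (proj1 S); reflexivity.
    + have ns' : ~ spec K q p by move=> [e [u v]]; apply ns; split; [rewrite e|split].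
      have [[e' H']|[[ne' [S' H']]|[ne' [ns'' H']]]] := dU_cases K q p.
      * congruence.
      * contradiction.
      * rewrite H H' Rmax_comm; reflexivity.
  - move=> p q r.
    have N1 := dU_nonneg K p q; have N2 := dU_nonneg K q r; have N3 := dU_nonneg K p r.
    case: (excluded_middle_informative (p = q)) => [e|npq].
    { subst. have [[e H1]|[[ne [S H1]]|[ne [ns H1]]]] := dU_cases K q q; try congruence; try contradiction. nra. }
    case: (excluded_middle_informative (q = r)) => [e|nqr].
    { subst. have [[e H1]|[[ne [S H1]]|[ne [ns H1]]]] := dU_cases K r r; try congruence; try contradiction. nra. }
    have [[e H]|[[ne [S H]]|[ne [ns H]]]] := dU_cases K p r.
    + rewrite H; nra.
    + case: (excluded_middle_informative (spec K p q)) => [Spq|nSpq].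
      * have Sqr : spec K q r.
        { move: S Spq => [e1 [u1 v1]] [e2 [u2 v2]]; split; [congruence|split; done]. }
        rewrite H (dU_spec Spq) (dU_spec Sqr) -(proj1 Spq).
        apply: tri_B => //.
        -- exact: (proj1 (proj1 (proj2 S))).
        -- exact: (proj1 (proj2 S)).
        -- rewrite (proj1 Spq); exact: (proj2 (proj2 Spq)).
        -- rewrite (proj1 S); exact: (proj2 (proj2 S)).
      * have [[e H1]|[[ne1 [S1 H1]]|[ne1 [ns1 H1]]]] := dU_cases K p q; try congruence; try contradiction.
        rewrite H H1.
        pose proof (tri_lt (snd p) (snd r) (proj1 (proj1 (proj2 S)))).
        pose proof (Rmax_l (MM (fst p)) (MM (fst q))). nra.
    + rewrite H.
      case: (excluded_middle_informative (spec K p q)) => [Spq|nSpq];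
      case: (excluded_middle_informative (spec K q r)) => [Sqr|nSqr].
      * exfalso; apply ns; move: Spq Sqr => [e1 [u1 v1]] [e2 [u2 v2]].
        split; [congruence|split; done].
      * have [[e H2]|[[ne2 [S2 H2]]|[ne2 [ns2 H2]]]] := dU_cases K q r; try congruence; try contradiction.
        rewrite H2 -(proj1 Spq). nra.
      * have [[e H1]|[[ne1 [S1 H1]]|[ne1 [ns1 H1]]]] := dU_cases K p q; try congruence; try contradiction.
        rewrite H1 (proj1 Sqr). nra.
      * have [[e H1]|[[ne1 [S1 H1]]|[ne1 [ns1 H1]]]] := dU_cases K p q; try congruence; try contradiction.
        have [[e H2]|[[ne2 [S2 H2]]|[ne2 [ns2 H2]]]] := dU_cases K q r; try congruence; try contradiction.
        rewrite H1 H2.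
        pose proof (Rmax_tri (MM (fst p)) (MM (fst r)) (Rle_trans _ _ _ Rle_0_1 (MM_ge1 (fst q)))).
        pose proof (Rmax_l (MM (fst p)) (MM (fst q))); pose proof (MM_ge1 (fst p)).
        pose proof (Rmax_l (MM (fst q)) (MM (fst r))); pose proof (MM_ge1 (fst q)). nra.
Qed.

Lemma valid_of K (X : Type) (d : X -> X -> R) x y z :
  condB K X d -> valid K (d x y, d y z, d x z).
Proof.
  move=> [[Hn [Hz Hs]] Hr]; unfold valid, ta, tb, tc; simpl.
  have := Hr x z y; have := Hr y x z; have := Hr x y z.
  rewrite (Hs z y) (Hs y x) => h1 h2 h3.
  split; [apply Hn|split; [apply Hn|split; [apply Hn|]]].
  split; [nra|split; [nra|split; [nra|]]].
  split; [move=> /Hz ->; reflexivity|].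
  split; [move=> /Hz ->; reflexivity|].
  move=> /Hz ->; apply Hs.
Qed.

Lemma spec_lab K t j k : valid K t -> (j = 0 \/ j = laby t \/ j = labz t)%nat ->
  (k = 0 \/ k = laby t \/ k = labz t)%nat -> dU K (t, j) (t, k) = tri t j k.
Proof. move=> V Hj Hk; apply: dU_spec; split; [done|split; split; done]. Qed.

Lemma lab_vals K t : valid K t ->
  tri t 0 (laby t) = ta t /\ tri t (laby t) (labz t) = tb t /\ tri t 0 (labz t) = tc t.
Proof.
  move=> [Ha [Hb [Hc [_ [_ [_ [Ia [Ib Ic]]]]]]]].
  unfold laby, labz, tri.
  destruct (Req_dec_T (ta t) 0) as [ea|na]; destruct (Req_dec_T (tc t) 0) as [ec|nc];
  destruct (Req_dec_T (tb t) 0) as [eb|nb]; simpl.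
  all: try (have := Ia ea); try (have := Ib eb); try (have := Ic ec); intros; split; [|split]; lra.
Qed.

Lemma F_zero (n : nat) (F : ('I_n -> R) -> R) : P_B n F ->
  forall v : 'I_n -> R, (forall i, 0 <= v i) -> (F v = 0 <-> v = fun _ => 0).
Proof.
  move=> HPB v Hv.
  have B : bmetric (forall i : 'I_n, R) (prodD n F (fun _ => R) (fun _ s t => Rabs (s - t))).
  { apply: HPB => i; split; [split; [|split]|].
    - move=> s t; apply Rabs_pos.
    - move=> s t; split; [|move=> ->; rewrite Rminus_diag Rabs_R0 //].
      unfold Rabs; destruct (Rcase_abs (s - t)); lra.
    - move=> s t; apply Rabs_minus_sym.
    - exists 1; split; [lra|]; move=> s t u.
      have := Rabs_triang (s - t) (t - u).
      replace (s - t + (t - u)) with (s - u) by ring. lra. }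
  have E := proj1 (proj2 (proj1 B)) v (fun _ => 0).
  unfold prodD in E.
  have Ev : (fun i => Rabs (v i - 0)) = v.
  { apply functional_extensionality => i; rewrite Rminus_0_r Rabs_pos_eq //. }
  rewrite Ev in E; exact E.
Qed.

Theorem corollary3p1 (n : nat) (F : ('I_n -> R) -> R)
  (HF : forall v : 'I_n -> R, (forall i, 0 <= v i) -> 0 <= F v) :
  P_B n F ->
  forall Ks : 'I_n -> R, (forall i, 1 <= Ks i) ->
  exists K : R, 1 <= K /\ P_BKs_BK n F Ks K.
Proof.
  move=> HPB Ks HK.
  have B : bmetric (forall i : 'I_n, (T3 * nat)%type)
             (prodD n F (fun _ => (T3 * nat)%type) (fun i => dU (Ks i))).
  { apply: HPB => i; have [S Rl] := dU_bmetric (HK i); split; [exact S|].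
    exists (Ks i); split; [apply HK|exact Rl]. }
  have [_ [K0 [HK0 R0]]] := B.
  exists K0; split; [exact HK0|].
  move=> X d Hd; split; [split; [|split]|].
  - move=> x y; apply: HF => i; apply (proj1 (proj1 (Hd i))).
  - move=> x y; unfold prodD; split.
    + move=> /(F_zero HPB) H.
      have H' : forall i, d i (x i) (y i) = 0.
      { move=> i; have := f_equal (fun f => f i) (H (fun i => proj1 (proj1 (Hd i)) _ _)); done. }
      apply functional_extensionality_dep => i.
      apply (proj1 (proj1 (proj2 (proj1 (Hd i))) _ _)); apply H'.
    + move=> ->.
      have -> : (fun i => d i (y i) (y i)) = (fun _ => 0).
      { apply functional_extensionality => i; apply (proj1 (proj2 (proj1 (Hd i)))); reflexivity. }
      apply (proj2 (F_zero HPB (fun _ => 0) (fun _ => Rle_refl 0))); reflexivity.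
  - move=> x y; unfold prodD; f_equal; apply functional_extensionality => i.
    apply (proj2 (proj2 (proj1 (Hd i)))).
  - move=> x y z.
    pose t := fun i => (d i (x i) (y i), d i (y i) (z i), d i (x i) (z i)).
    have V : forall i, valid (Ks i) (t i) by move=> i; apply: valid_of; apply Hd.
    have := R0 (fun i => (t i, 0%nat)) (fun i => (t i, laby (t i))) (fun i => (t i, labz (t i))).
    unfold prodD.
    have -> : (fun i => dU (Ks i) (t i, 0%nat) (t i, labz (t i))) = (fun i => d i (x i) (z i)).
    { apply functional_extensionality => i.
      rewrite spec_lab //; [|by left|by right; right]. exact (proj2 (proj2 (lab_vals (V i)))). }
    have -> : (fun i => dU (Ks i) (t i, 0%nat) (t i, laby (t i))) = (fun i => d i (x i) (y i)).
    { apply functional_extensionality => i.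
      rewrite spec_lab //; [|by left|by right; left]. exact (proj1 (lab_vals (V i))). }
    have -> : (fun i => dU (Ks i) (t i, laby (t i)) (t i, labz (t i))) = (fun i => d i (y i) (z i)).
    { apply functional_extensionality => i.
      rewrite spec_lab //; [|by right; left|by right; right]. exact (proj1 (proj2 (lab_vals (V i)))). }
    done.
Qed.
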